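(* Let $\epsilon>0$, $\delta\ge0$, $\alpha\in(0,1)$, $n\ge 1$, $\theta_0\in(0,1)$, and let $X\sim\mathrm{Binom}(n,\theta)$ with $\theta$ unknown. Set $b=e^{-\epsilon}$, $q=\frac{2\delta b}{1-b+2\delta b}$, $N\sim\mathrm{Tulap}(0,b,q)$, and set $\phi^*_x=F_N(x-m_1)$ and $\psi^*_x=1-F_N(x-m_2)$, where $m_1,m_2\in\mathbb{R}$ are chosen such that $\mathbb{E}_{\theta_0}\phi^*_X=\alpha$ and $\mathbb{E}_{\theta_0}\psi^*_X=\alpha$. Then $\phi^*$ is the uniformly most powerful level-$\alpha$ test among $\mathscr D^n_{\epsilon,\delta}$ for testing $H_0:\theta\le\theta_0$ versus $H_1:\theta>\theta_0$, and $\psi^*$ is the uniformly most powerful level-$\alpha$ test among $\mathscr D^n_{\epsilon,\delta}$ for testing $H_0:\theta\ge\theta_0$ versus $H_1:\theta<\theta_0$.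
   Context: Nearest integer function: for $t\in\mathbb{R}$, $[t]$ is the integer nearest to $t$, where for $z\in\mathbb{Z}$, $[z+1/2]$ is defined to be the nearest even integer. Tulap distribution: for $m\in\mathbb{R}$, $b\in(0,1)$, $q\in[0,1)$, $N_0\sim\mathrm{Tulap}(m,b,0)$ has cdf $F_{N_0}(x)=\frac{b^{-[x-m]}}{1+b}\big(b+(x-m-[x-m]+\tfrac12)(1-b)\big)$ for $x\leq [m]$ and $F_{N_0}(x)=1-\frac{b^{[x-m]}}{1+b}\big(b+([x-m]-(x-m)+\tfrac12)(1-b)\big)$ for $x>[m]$; and $N\sim \mathrm{Tulap}(m,b,q)$ has cdf $F_N(x)=\frac{F_{N_0}(x)-q/2}{1-q}\,I\{q/2\leq F_{N_0}(x)\leq 1-q/2\}+I\{F_{N_0}(x)>1-q/2\}$. A (randomized) test is a function $\phi:\{0,1,\dots,n\}\to[0,1]$, $\phi_x$ being the probability of rejecting $H_0$ when $X=x$. $\mathscr D^n_{\epsilon,\delta}$ is the set of tests $\phi$ such that for all $x\in\{0,\dots,n-1\}$: $\phi_x\le e^\epsilon\phi_{x+1}+\delta$, $\phi_{x+1}\le e^\epsilon\phi_x+\delta$, $1-\phi_x\le e^\epsilon(1-\phi_{x+1})+\delta$, $1-\phi_{x+1}\le e^\epsilon(1-\phi_x)+\delta$. A test $\phi^*\in\Phi$ is uniformly most powerful at level $\alpha$ among $\Phi$ if $\sup_{\theta\in\Theta_0}\mathbb{E}_\theta\phi^*\le\alpha$ and for every $\phi\in\Phi$ with $\sup_{\theta\in\Theta_0}\mathbb{E}_\theta\phi\le\alpha$,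 $\mathbb{E}_\theta\phi^*\ge\mathbb{E}_\theta\phi$ for all $\theta$ in the alternative. *)

(* Defs.v *)
From Stdlib Require Import Reals Lra ZArith.
Open Scope R_scope.

Definition nearest_int (t : R) : Z :=
  let f := Int_part t in
  let d := t - IZR f in
  if Rlt_dec d (1/2) then f
  else if Rlt_dec (1/2) d then (f + 1)%Z
  else if Z.even f then f else (f + 1)%Z.

Definition tulap0_cdf (m b x : R) : R :=
  let k := nearest_int (x - m) in
  if Rle_dec x (IZR (nearest_int m)) then
    powerRZ b (- k) / (1 + b) * (b + (x - m - IZR k + 1/2) * (1 - b))
  else
    1 - powerRZ b k / (1 + b) * (b + (IZR k - (x - m) + 1/2) * (1 - b)).

Definition tulap_cdf (m b q x : R) : R :=
  let F0 := tulap0_cdf m b x in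
  (if Rle_dec (q/2) F0 then if Rle_dec F0 (1 - q/2) then (F0 - q/2) / (1 - q) else 0 else 0)
  + (if Rlt_dec (1 - q/2) F0 then 1 else 0).

Definition binom_pmf (n : nat) (theta : R) (x : nat) : R :=
  C n x * theta ^ x * (1 - theta) ^ (n - x).

Definition expect (n : nat) (theta : R) (phi : nat -> R) : R :=
  sum_f_R0 (fun x => phi x * binom_pmf n theta x) n.

Definition is_test (n : nat) (phi : nat -> R) : Prop :=
  forall x, (x <= n)%nat -> 0 <= phi x <= 1.

Definition DP_tests (n : nat) (eps delta : R) (phi : nat -> R) : Prop :=
  is_test n phi /\
  forall x : nat, (x < n)%nat ->
    phi x <= exp eps * phi (S x) + delta /\
    phi (S x) <= exp eps * phi x + delta /\
    1 - phi x <= exp eps * (1 - phi (S x)) + delta /\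
    1 - phi (S x) <= exp eps * (1 - phi x) + delta.

Definition level (n : nat) (Theta0 : R -> Prop) (alpha : R) (phi : nat -> R) : Prop :=
  forall theta, Theta0 theta -> expect n theta phi <= alpha.

Definition UMP (n : nat) (Phi : (nat -> R) -> Prop) (Theta0 Theta1 : R -> Prop)
  (alpha : R) (phi : nat -> R) : Prop :=
  Phi phi /\ level n Theta0 alpha phi /\
  forall psi, Phi psi -> level n Theta0 alpha psi ->
    forall theta, Theta1 theta -> expect n theta phi >= expect n theta psi.

(* Main.v *)
Require Import Defs.
From Stdlib Require Import Reals Lra Lia ZArith Psatz.
Open Scope R_scope.

Definition near (t : R) (j : Z) := -(1/2) <= t - IZR j <= 1/2.

Lemma ni_near t : near t (nearest_int t).
Proof.
  unfold near, nearest_int. cbv zeta.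
  destruct (base_Int_part t) as [H1 H2].
  destruct (Rlt_dec (t - IZR (Int_part t)) (1/2)).
  - lra.
  - destruct (Rlt_dec (1/2) (t - IZR (Int_part t))).
    + rewrite plus_IZR. simpl. lra.
    + destruct (Z.even (Int_part t)); [|rewrite plus_IZR]; simpl; lra.
Qed.

Lemma near_cases t j j' : near t j -> near t j' ->
  j' = j \/ (j' = (j + 1)%Z /\ t = IZR j + 1/2) \/ (j = (j' + 1)%Z /\ t = IZR j' + 1/2).
Proof.
  unfold near; intros H1 H2.
  assert (Ha : IZR (j' - j) <= 1) by (rewrite minus_IZR; lra).
  assert (Hb : -1 <= IZR (j' - j)) by (rewrite minus_IZR; lra).
  apply le_IZR in Ha. replace (-1) with (IZR (-1)) in Hb by reflexivity.
  apply le_IZR in Hb.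
  assert (j' = j \/ j' = j + 1 \/ j = j' + 1)%Z as [E|[E|E]] by lia.
  - left; auto.
  - right; left; split; auto. subst. rewrite plus_IZR in *. simpl in *. lra.
  - right; right; split; auto. subst. rewrite plus_IZR in *. simpl in *. lra.
Qed.

Lemma near0 j : near 0 j -> j = 0%Z.
Proof.
  unfold near; intros [H1 H2].
  assert (Ha : IZR j < 1) by lra. assert (Hb : IZR (-1) < IZR j) by (simpl; lra).
  apply lt_IZR in Ha. apply lt_IZR in Hb. lia.
Qed.

Definition Lf (b t : R) (j : Z) :=
  powerRZ b (- j) / (1 + b) * (b + (t - IZR j + 1/2) * (1 - b)).
Definition Rf (b t : R) (j : Z) :=
  1 - powerRZ b j / (1 + b) * (b + (IZR j - t + 1/2) * (1 - b)).

Lemma Lf_step b t j : 0 < b -> Lf b t (j + 1) = powerRZ b (- j) / (1 + b) * (b + (t - IZR j - 1 + 1/2) * (1 - b)) / b.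
Proof.
  intros Hb. unfold Lf.
  replace (- (j + 1))%Z with (- j + -1)%Z by lia.
  rewrite powerRZ_add by lra. rewrite plus_IZR. simpl. field. lra.
Qed.

Lemma Rf_step b t j : 0 < b -> Rf b t (j + 1) = 1 - powerRZ b j / (1 + b) * (b + (IZR j + 1 - t + 1/2) * (1 - b)) * b.
Proof.
  intros Hb. unfold Rf.
  rewrite powerRZ_add by lra. rewrite plus_IZR. simpl. field. lra.
Qed.

Lemma Lf_indep b t j j' : 0 < b -> near t j -> near t j' -> Lf b t j = Lf b t j'.
Proof.
  intros Hb H1 H2. destruct (near_cases t j j' H1 H2) as [E|[[E Et]|[E Et]]]; subst.
  - reflexivity.
  - rewrite Lf_step by lra. unfold Lf. field. lra.
  - rewrite Lf_step by lra. unfold Lf. field. lra.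
Qed.

Lemma Rf_indep b t j j' : 0 < b -> near t j -> near t j' -> Rf b t j = Rf b t j'.
Proof.
  intros Hb H1 H2. destruct (near_cases t j j' H1 H2) as [E|[[E Et]|[E Et]]]; subst.
  - reflexivity.
  - rewrite Rf_step by lra. unfold Rf. field. lra.
  - rewrite Rf_step by lra. unfold Rf. field. lra.
Qed.

Lemma Lf_Rf0 b t : 0 < b -> Lf b t 0 = Rf b t 0.
Proof. intros Hb. unfold Lf, Rf. simpl. field. lra. Qed.

Lemma F0_eq b t : tulap0_cdf 0 b t =
  if Rle_dec t 0 then Lf b t (nearest_int t) else Rf b t (nearest_int t).
Proof.
  unfold tulap0_cdf. cbv zeta.
  rewrite (near0 _ (ni_near 0)). rewrite Rminus_0_r.
  destruct (Rle_dec t (IZR 0)); reflexivity.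
Qed.

Lemma F0_left b t j : 0 < b -> t <= 1/2 -> near t j -> tulap0_cdf 0 b t = Lf b t j.
Proof.
  intros Hb Ht Hj. rewrite F0_eq. destruct (Rle_dec t 0).
  - apply Lf_indep; auto. apply ni_near.
  - assert (H0 : near t 0) by (unfold near; simpl; lra).
    rewrite (Rf_indep b t _ 0 Hb (ni_near t) H0).
    rewrite <- Lf_Rf0 by lra. apply Lf_indep; auto.
Qed.

Lemma F0_right b t j : 0 < b -> -(1/2) <= t -> near t j -> tulap0_cdf 0 b t = Rf b t j.
Proof.
  intros Hb Ht Hj. rewrite F0_eq. destruct (Rle_dec t 0).
  - assert (H0 : near t 0) by (unfold near; simpl; lra).
    rewrite (Lf_indep b t _ 0 Hb (ni_near t) H0).
    rewrite Lf_Rf0 by lra. apply Rf_indep; auto.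
  - apply Rf_indep; auto. apply ni_near.
Qed.

Lemma powRZ_le1 b k : 0 < b < 1 -> (0 <= k)%Z -> powerRZ b k <= 1.
Proof.
  intros Hb Hk. rewrite <- (Z2Nat.id k Hk). rewrite <- pow_powerRZ.
  induction (Z.to_nat k) as [|m IH]; simpl; [lra|].
  assert (0 <= b ^ m) by (apply pow_le; lra). nra.
Qed.

Lemma powRZ_leb b k : 0 < b < 1 -> (1 <= k)%Z -> powerRZ b k <= b.
Proof.
  intros Hb Hk. replace k with (1 + (k - 1))%Z by lia.
  rewrite powerRZ_add by lra. simpl.
  assert (powerRZ b (k-1) <= 1) by (apply powRZ_le1; lia || lra).
  assert (0 <= powerRZ b (k-1)) by (apply powerRZ_le; lra). nra.
Qed.

Lemma near_S t j : near t j -> near (t + 1) (j + 1)%Z.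
Proof. unfold near. rewrite plus_IZR. simpl. lra. Qed.

Section F0.
Variable b : R.
Hypothesis Hb : 0 < b < 1.
Let F0 := tulap0_cdf 0 b.

Lemma F0_case1 t : t <= -(1/2) ->
  F0 (t + 1) = F0 t / b /\ 0 <= F0 t <= b / (1 + b).
Proof.
  intros Ht. set (j := nearest_int t). assert (Hj : near t j) by apply ni_near.
  unfold F0. rewrite (F0_left b t j) by (auto; lra).
  rewrite (F0_left b (t+1) (j+1)%Z) by (auto using near_S; lra).
  assert (Hjle : (j <= 0)%Z).
  { unfold near in Hj. assert (IZR j < 1) by lra. apply lt_IZR in H. lia. }
  assert (HP : 0 < powerRZ b (- j)) by (apply powerRZ_lt; lra).
  split.
  - rewrite Lf_step by lra. unfold Lf. field. lra.
  - unfold Lf. unfold near in Hj. split.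
    + apply Rmult_le_pos. apply Rmult_le_pos; [lra|]. apply Rlt_le, Rinv_0_lt_compat; lra.
      nra.
    + destruct (Z.eq_dec j 0) as [E|E].
      * subst j. rewrite E in *. simpl in *. 
        assert (t = -(1/2)) by lra. subst t. apply Req_le. field. lra.
      * assert (powerRZ b (-j) <= b) by (apply powRZ_leb; lra || lia).
        unfold Rdiv. rewrite Rmult_assoc, (Rmult_comm (/ (1+b))), <- Rmult_assoc.
        apply Rmult_le_compat_r. apply Rlt_le, Rinv_0_lt_compat; lra.
        assert (0 <= (t - IZR j + 1/2) * (1 - b)) by nra.
        assert ((t - IZR j + 1/2) * (1 - b) <= 1 - b) by nra.
        nra.
Qed.

Lemma F0_case2 t : -(1/2) <= t ->
  1 - F0 (t + 1) = b * (1 - F0 t) /\ b / (1 + b) <= F0 t <= 1.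
Proof.
  intros Ht. set (j := nearest_int t). assert (Hj : near t j) by apply ni_near.
  unfold F0. rewrite (F0_right b t j) by (auto; lra).
  rewrite (F0_right b (t+1) (j+1)%Z) by (auto using near_S; lra).
  assert (Hjle : (-1 <= j)%Z).
  { unfold near in Hj. assert (IZR (-1) <= IZR j) by (simpl; lra). apply le_IZR in H. lia. }
  assert (HP : 0 < powerRZ b j) by (apply powerRZ_lt; lra).
  split.
  - rewrite Rf_step by lra. unfold Rf. field. lra.
  - unfold Rf. unfold near in Hj. split.
    + destruct (Z.eq_dec j (-1)) as [E|E].
      * rewrite E in *. simpl in *.
        assert (t = -(1/2)) by lra. subst t. apply Req_le. field. lra.
      * assert (powerRZ b j <= 1) by (apply powRZ_le1; lra || lia).
        assert (0 <= (IZR j - t + 1/2) * (1 - b)) by nra.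
        assert ((IZR j - t + 1/2) * (1 - b) <= 1 - b) by nra.
        assert (powerRZ b j * (b + (IZR j - t + 1 / 2) * (1 - b)) <= 1) by nra.
        assert (powerRZ b j / (1 + b) * (b + (IZR j - t + 1 / 2) * (1 - b)) <= 1/(1+b)).
        { replace (powerRZ b j / (1 + b) * (b + (IZR j - t + 1 / 2) * (1 - b))) with
            ((powerRZ b j * (b + (IZR j - t + 1 / 2) * (1 - b))) / (1+b)) by (field; lra).
          unfold Rdiv. apply Rmult_le_compat_r. apply Rlt_le, Rinv_0_lt_compat; lra. auto. }
        replace (b / (1+b)) with (1 - 1/(1+b)) by (field; lra). lra.
    + assert (0 <= powerRZ b j / (1 + b) * (b + (IZR j - t + 1 / 2) * (1 - b))).
      { apply Rmult_le_pos. apply Rmult_le_pos; [lra|]. apply Rlt_le, Rinv_0_lt_compat; lra. nra. }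
      lra.
Qed.
End F0.

Definition clip (g : R) := if Rlt_dec g 0 then 0 else if Rlt_dec 1 g then 1 else g.

Lemma clip_range g : 0 <= clip g <= 1.
Proof. unfold clip; repeat destruct Rlt_dec; lra. Qed.

Lemma clip_mono g h : g <= h -> clip g <= clip h.
Proof. unfold clip; repeat destruct Rlt_dec; lra. Qed.

Lemma clip_props b c d g h : 0 < b -> b * c = 1 -> 1 <= c -> 0 <= d ->
  h <= c * g + d -> 1 - g <= c * (1 - h) + d ->
  (h = c * g + d \/ 1 - g = c * (1 - h) + d) -> g <= h ->
  clip h <= c * clip g + d /\ clip g <= c * clip h + d /\
  1 - clip g <= c * (1 - clip h) + d /\ 1 - clip h <= c * (1 - clip g) + d /\
  (0 < clip g -> clip h = 1 \/ clip h >= c * clip g + d \/ clip h >= 1 - b * (1 - clip g - d)).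
Proof.
  intros Hb Hbc Hc Hd H1 H2 H3 H4.
  unfold clip; repeat destruct Rlt_dec; repeat split; try nra.
Qed.

Lemma x_facts b c x y : 0 < b < 1 -> b * c = 1 ->
  ((y = c * x /\ 0 <= x <= b / (1 + b)) \/ (1 - y = b * (1 - x) /\ b / (1 + b) <= x <= 1)) ->
  y <= c * x /\ 1 - x <= c * (1 - y) /\ (y = c * x \/ 1 - x = c * (1 - y)) /\ x <= y.
Proof.
  intros Hb Hbc [[E [H1 H2]]|[E [H1 H2]]].
  - assert (H3 : (1 + b) * x <= b).
    { apply Rmult_le_reg_r with (/ (1+b)). apply Rinv_0_lt_compat; lra.
      replace ((1 + b) * x * / (1 + b)) with x by (field; lra). exact H2. }
    assert (1 <= c) by nra.
    assert (H4 : c * ((1 + b) * x) <= c * b) by nra.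
    assert (H5 : c * x + x <= 1) by nra.
    assert (H6 : 0 <= (c - 1) * (1 - (c * x + x))) by nra.
    subst y. repeat split; try nra.
  - assert (H3 : b <= (1 + b) * x).
    { apply Rmult_le_reg_r with (/ (1+b)). apply Rinv_0_lt_compat; lra.
      replace ((1 + b) * x * / (1 + b)) with x by (field; lra). exact H1. }
    assert (1 <= c) by nra.
    assert (1 - x = c * (1 - y)) by (rewrite E; nra).
    repeat split; try nra.
Qed.

Lemma div_sign D z : 0 < D -> D * z <= 0 -> z <= 0.
Proof. intros. nra. Qed.

Lemma g_facts b c A D d x y g h : 0 < b < 1 -> b * c = 1 -> 0 < D -> d * D = (c - 1) * A ->
  x = A + D * g -> y = A + D * h -> 2 * A + D = 1 ->
  ((y = c * x /\ 0 <= x <= b / (1 + b)) \/ (1 - y = b * (1 - x) /\ b / (1 + b) <= x <= 1)) ->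
  h <= c * g + d /\ 1 - g <= c * (1 - h) + d /\ (h = c * g + d \/ 1 - g = c * (1 - h) + d) /\ g <= h.
Proof.
  intros Hb Hbc HD Hd Ex Ey HAD Hc.
  destruct (x_facts b c x y Hb Hbc Hc) as [X1 [X2 [X3 X4]]].
  assert (K1 : D * (h - (c * g + d)) = y - c * x) by (rewrite Ex, Ey; nra).
  assert (K2 : D * ((1 - g) - (c * (1 - h) + d)) = (1 - x) - c * (1 - y)) by (rewrite Ex, Ey; nra).
  assert (K4 : D * (g - h) = x - y) by (rewrite Ex, Ey; nra).
  repeat split.
  - assert (h - (c * g + d) <= 0) by (apply (div_sign D); lra). lra.
  - assert ((1 - g) - (c * (1 - h) + d) <= 0) by (apply (div_sign D); lra). lra.
  - destruct X3 as [X3|X3].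
    + left. assert (D * (h - (c * g + d)) = D * 0) by lra.
      apply Rmult_eq_reg_l in H; lra.
    + right. assert (D * ((1 - g) - (c * (1 - h) + d)) = D * 0) by lra.
      apply Rmult_eq_reg_l in H; lra.
  - assert (g - h <= 0) by (apply (div_sign D); lra). lra.
Qed.

Lemma tulap_clip b q t : 0 <= q < 1 ->
  tulap_cdf 0 b q t = clip ((tulap0_cdf 0 b t - q/2) / (1 - q)).
Proof.
  intros Hq. unfold tulap_cdf, clip. cbv zeta.
  set (x := tulap0_cdf 0 b t).
  set (g := (x - q/2) / (1 - q)).
  assert (Ex : x = q/2 + (1 - q) * g) by (unfold g; field; lra).
  clearbody g. clearbody x. subst x.
  repeat destruct Rle_dec; repeat destruct Rlt_dec; try nra.
Qed.

Section Main.
Variables eps delta : R.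
Hypothesis Heps : 0 < eps.
Hypothesis Hdelta : 0 <= delta.

Let c := exp eps.
Let b := exp (- eps).
Let q := 2 * delta * b / (1 - b + 2 * delta * b).

Lemma bc_facts : b * c = 1 /\ 0 < b < 1 /\ 1 < c.
Proof.
  unfold b, c. rewrite exp_Ropp.
  assert (1 < exp eps) by (rewrite <- exp_0; apply exp_increasing; lra).
  split. field. lra. split. split. apply Rinv_0_lt_compat; lra.
  rewrite <- Rinv_1. apply Rinv_lt_contravar; lra. lra.
Qed.

Lemma q_facts : 0 <= q < 1 /\ delta * (1 - q) = (c - 1) * (q / 2).
Proof.
  destruct bc_facts as [Hbc [Hb Hc]].
  assert (HS : 0 < 1 - b + 2 * delta * b) by nra.
  unfold q. split. split.
  - apply Rmult_le_pos. nra. apply Rlt_le, Rinv_0_lt_compat; lra.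
  - apply Rmult_lt_reg_r with (1 - b + 2 * delta * b); auto.
    unfold Rdiv. rewrite Rmult_assoc, Rinv_l by lra. lra.
  - replace c with (/ b) by (field_simplify_eq; lra || (intro; lra)).
    field. split; lra.
Qed.

Definition Ftul t := tulap_cdf 0 b q t.

Lemma F_props t :
  0 <= Ftul t <= 1 /\
  Ftul (t+1) <= c * Ftul t + delta /\ Ftul t <= c * Ftul (t+1) + delta /\
  1 - Ftul t <= c * (1 - Ftul (t+1)) + delta /\ 1 - Ftul (t+1) <= c * (1 - Ftul t) + delta /\
  (0 < Ftul t -> Ftul (t+1) = 1 \/ Ftul (t+1) >= c * Ftul t + delta \/
      Ftul (t+1) >= 1 - b * (1 - Ftul t - delta)).
Proof.
  destruct bc_facts as [Hbc [Hb Hc]]. destruct q_facts as [Hq HdD].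
  unfold Ftul. rewrite !tulap_clip by auto.
  set (x := tulap0_cdf 0 b t). set (y := tulap0_cdf 0 b (t+1)).
  set (g := (x - q/2) / (1 - q)). set (h := (y - q/2) / (1 - q)).
  assert (Hxy : (y = c * x /\ 0 <= x <= b / (1 + b)) \/ (1 - y = b * (1 - x) /\ b / (1 + b) <= x <= 1)).
  { destruct (Rle_dec t (-(1/2))).
    - left. destruct (F0_case1 b Hb t r) as [E B]. split; auto. unfold y. rewrite E.
      fold x. assert (Hib : / b = c) by (apply Rmult_eq_reg_l with b; [rewrite Rinv_r; lra | lra]). unfold Rdiv. rewrite Hib. ring.
    - right. apply F0_case2; auto; lra. }
  assert (G := g_facts b c (q/2) (1-q) delta x y g h Hb Hbc ltac:(lra) HdD
      ltac:(unfold g; field; lra) ltac:(unfold h; field; lra) ltac:(lra) Hxy).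
  destruct G as [G1 [G2 [G3 G4]]].
  split. apply clip_range.
  apply (clip_props b c delta g h); auto; lra.
Qed.
End Main.

Lemma sum_nonneg (a : nat -> R) N : (forall x, (x <= N)%nat -> 0 <= a x) -> 0 <= sum_f_R0 a N.
Proof.
  induction N; intros H; simpl. apply H; lia.
  apply Rplus_le_le_0_compat. apply IHN; intros; apply H; lia. apply H; lia.
Qed.

Lemma sum_ext (a a' : nat -> R) N : (forall x, (x <= N)%nat -> a x = a' x) -> sum_f_R0 a N = sum_f_R0 a' N.
Proof.
  induction N; intros H; simpl. apply H; lia.
  rewrite IHN by (intros; apply H; lia). rewrite H by lia. reflexivity.
Qed.

Lemma C_nonneg n x : 0 <= C n x.
Proof.
  unfold C. unfold Rdiv. apply Rmult_le_pos. apply pos_INR.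
  apply Rlt_le, Rinv_0_lt_compat. apply Rmult_lt_0_compat; apply INR_fact_lt_0.
Qed.

Lemma pmf_nonneg n th x : 0 <= th <= 1 -> 0 <= binom_pmf n th x.
Proof.
  intros H. unfold binom_pmf. apply Rmult_le_pos. apply Rmult_le_pos. apply C_nonneg.
  apply pow_le; lra. apply pow_le; lra.
Qed.

Lemma pmf_sum n th : sum_f_R0 (binom_pmf n th) n = 1.
Proof.
  unfold binom_pmf. rewrite <- binomial. replace (th + (1 - th)) with 1 by ring. apply pow1.
Qed.

Lemma expect_const n th a : expect n th (fun _ => a) = a.
Proof.
  unfold expect. transitivity (a * sum_f_R0 (binom_pmf n th) n).
  - rewrite scal_sum. apply sum_ext. intros. ring.
  - rewrite pmf_sum. ring.
Qed.

Lemma expect_minus n th f g : expect n th f - expect n th g = expect n th (fun x => f x - g x).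
Proof.
  unfold expect. rewrite <- minus_sum. apply sum_ext. intros. ring.
Qed.

Definition rr n th th0 (x : nat) := (th / th0) ^ x * ((1 - th) / (1 - th0)) ^ (n - x).

Lemma pmf_ratio n th th0 x : 0 < th0 < 1 ->
  binom_pmf n th x = rr n th th0 x * binom_pmf n th0 x.
Proof.
  intros H. unfold binom_pmf, rr.
  transitivity (C n x * ((th / th0) * th0) ^ x * (((1 - th) / (1 - th0)) * (1 - th0)) ^ (n - x)).
  - f_equal. f_equal. f_equal. field; lra. f_equal. field; lra.
  - rewrite !Rpow_mult_distr. ring.
Qed.

Lemma compare n th th0 k f g : 0 <= th <= 1 -> 0 < th0 < 1 ->
  (forall x, (x <= n)%nat -> 0 <= (f x - g x) * (rr n th th0 x - rr n th th0 k)) ->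
  expect n th f - expect n th g >= rr n th th0 k * (expect n th0 f - expect n th0 g).
Proof.
  intros Hth Hth0 H. rewrite !expect_minus. unfold expect.
  rewrite scal_sum. apply Rle_ge. apply Rminus_le. apply Ropp_le_cancel. rewrite Ropp_minus_distr, Ropp_0.
  rewrite <- minus_sum. apply sum_nonneg. intros x Hx.
  rewrite (pmf_ratio n th th0 x Hth0).
  replace ((f x - g x) * (rr n th th0 x * binom_pmf n th0 x) -
           (f x - g x) * binom_pmf n th0 x * rr n th th0 k)
    with (((f x - g x) * (rr n th th0 x - rr n th th0 k)) * binom_pmf n th0 x) by ring.
  apply Rmult_le_pos. apply H; auto. apply pmf_nonneg; lra.
Qed.

Lemma rr_nonneg n th th0 x : 0 <= th <= 1 -> 0 < th0 < 1 -> 0 <= rr n th th0 x.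
Proof.
  intros. unfold rr. apply Rmult_le_pos; apply pow_le; unfold Rdiv;
  apply Rmult_le_pos; try lra; apply Rlt_le, Rinv_0_lt_compat; lra.
Qed.

Lemma rr_step_up n th th0 x : th0 <= th <= 1 -> 0 < th0 < 1 -> (x < n)%nat ->
  rr n th th0 x <= rr n th th0 (S x).
Proof.
  intros H1 H2 Hx. unfold rr.
  set (a := th / th0). set (be := (1 - th) / (1 - th0)).
  assert (Ha : 1 <= a). { unfold a. apply (Rmult_le_reg_r th0). lra. field_simplify; lra. }
  assert (Hbe : 0 <= be <= 1). { unfold be. split. unfold Rdiv; apply Rmult_le_pos; [lra|apply Rlt_le, Rinv_0_lt_compat; lra].
    apply (Rmult_le_reg_r (1 - th0)). lra. field_simplify; lra. }
  replace (n - x)%nat with (S (n - S x)) by lia. simpl.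
  assert (0 <= a ^ x) by (apply pow_le; lra). assert (0 <= be ^ (n - S x)) by (apply pow_le; lra).
  assert (0 <= a ^ x * be ^ (n - S x)) by (apply Rmult_le_pos; auto).
  nra.
Qed.

Lemma rr_step_down n th th0 x : 0 <= th <= th0 -> 0 < th0 < 1 -> (x < n)%nat ->
  rr n th th0 (S x) <= rr n th th0 x.
Proof.
  intros H1 H2 Hx. unfold rr.
  set (a := th / th0). set (be := (1 - th) / (1 - th0)).
  assert (Ha : 0 <= a <= 1). { unfold a. split. unfold Rdiv; apply Rmult_le_pos; [lra|apply Rlt_le, Rinv_0_lt_compat; lra].
    apply (Rmult_le_reg_r th0). lra. field_simplify; lra. }
  assert (Hbe : 1 <= be). { unfold be. apply (Rmult_le_reg_r (1 - th0)). lra. field_simplify; lra. }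
  replace (n - x)%nat with (S (n - S x)) by lia. simpl.
  assert (0 <= a ^ x) by (apply pow_le; lra). assert (0 <= be ^ (n - S x)) by (apply pow_le; lra).
  assert (0 <= a ^ x * be ^ (n - S x)) by (apply Rmult_le_pos; auto).
  nra.
Qed.

Lemma rr_up n th th0 x y : th0 <= th <= 1 -> 0 < th0 < 1 -> (x <= y)%nat -> (y <= n)%nat ->
  rr n th th0 x <= rr n th th0 y.
Proof.
  intros H1 H2 Hxy Hy. induction Hxy. lra.
  eapply Rle_trans. apply IHHxy; lia. apply rr_step_up; auto; lia.
Qed.

Lemma rr_down n th th0 x y : 0 <= th <= th0 -> 0 < th0 < 1 -> (x <= y)%nat -> (y <= n)%nat ->
  rr n th th0 y <= rr n th th0 x.
Proof.
  intros H1 H2 Hxy Hy. induction Hxy. lra.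
  eapply Rle_trans. apply rr_step_down; auto; lia. apply IHHxy; lia.
Qed.


Lemma propag b c d u v u' v' : 0 < b -> b <= 1 -> b * c = 1 -> 0 <= d ->
  u <= v -> 0 < v -> 0 <= u -> u' <= 1 -> u' <= c * u + d -> 1 - u <= c * (1 - u') + d ->
  (v' = 1 \/ v' >= c * v + d \/ v' >= 1 - b * (1 - v - d)) -> u' <= v' /\ 0 < v'.
Proof.
  intros Hb Hb1 Hbc Hd H1 H2 H3 H4 H5 H6 H7.
  assert (0 < c) by nra.
  assert (H8 : b * (1 - u) <= b * (c * (1 - u') + d)) by nra.
  assert (u' <= 1 - b * (1 - u - d)) by nra.
  assert (c * u <= c * v) by nra. assert (b * u <= b * v) by nra. assert (0 < b * v) by nra.
  assert (0 <= b * d) by nra. assert (0 <= c * d) by nra. assert (0 < c * v) by nra.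
  destruct H7 as [H7|[H7|H7]]; split; nra.
Qed.

Lemma crossing n b c d (phi chi : nat -> R) : 0 < b -> b <= 1 -> b * c = 1 -> 0 <= d ->
  (forall x, (x < n)%nat -> 0 < phi x -> phi (S x) = 1 \/ phi (S x) >= c * phi x + d \/
      phi (S x) >= 1 - b * (1 - phi x - d)) ->
  (forall x, (x <= n)%nat -> 0 <= chi x <= 1) ->
  (forall x, (x < n)%nat -> chi (S x) <= c * chi x + d /\ 1 - chi x <= c * (1 - chi (S x)) + d) ->
  exists k, (k <= n)%nat /\ forall x, (x <= n)%nat ->
     ((x < k)%nat -> phi x <= chi x) /\ ((k < x)%nat -> chi x <= phi x).
Proof.
  intros Hb Hb1 Hbc Hd Hphi Hchi Hdp.
  assert (Main : forall N, (N <= n)%nat -> (forall x, (x <= N)%nat -> phi x <= chi x) \/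
     exists k, (k <= N)%nat /\ (forall x, (x < k)%nat -> phi x <= chi x) /\
        (forall x, (k <= x <= N)%nat -> chi x <= phi x /\ 0 < phi x)).
  { induction N; intros HN.
    - destruct (Rle_dec (phi 0%nat) (chi 0%nat)).
      + left. intros x Hx. replace x with 0%nat by lia. auto.
      + right. exists 0%nat. split. lia. split. intros; lia.
        intros x Hx. replace x with 0%nat by lia. specialize (Hchi 0%nat ltac:(lia)). lra.
    - destruct (IHN ltac:(lia)) as [L|[k [Hk [R1 R2]]]].
      + destruct (Rle_dec (phi (S N)) (chi (S N))).
        * left. intros x Hx. destruct (Nat.eq_dec x (S N)). subst; auto. apply L; lia.
        * right. exists (S N). split. lia. split. intros; apply L; lia.
          intros x Hx. replace x with (S N) by lia. specialize (Hchi (S N) ltac:(lia)). lra.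
      + right. exists k. split. lia. split. auto.
        intros x Hx. destruct (Nat.eq_dec x (S N)).
        * subst x. destruct (R2 N ltac:(lia)) as [A1 A2].
          destruct (Hdp N ltac:(lia)) as [D1 D2].
          apply (propag b c d (chi N) (phi N)); auto.
          all: first [ destruct (Hchi N ltac:(lia)); assumption | destruct (Hchi (S N) ltac:(lia)); assumption | apply Hphi; auto; lia ].
        * apply R2; lia. }
  destruct (Main n (le_n n)) as [L|[k [Hk [R1 R2]]]].
  - exists n. split. lia. intros x Hx. split. intros; apply L; lia. intros; lia.
  - exists k. split. auto. intros x Hx. split. intros; apply R1; auto.
    intros. apply R2; lia.
Qed.

Lemma DP_compl n eps d chi : DP_tests n eps d chi -> DP_tests n eps d (fun x => 1 - chi x).
Proof.
  intros [H1 H2]. split.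
  - intros x Hx. specialize (H1 x Hx). lra.
  - intros x Hx. destruct (H2 x Hx) as [A1 [A2 [A3 A4]]].
    replace (1 - (1 - chi x)) with (chi x) by ring.
    replace (1 - (1 - chi (S x))) with (chi (S x)) by ring. tauto.
Qed.

Lemma seq_props eps delta m x : 0 < eps -> 0 <= delta ->
  let F := fun x : nat => Ftul eps delta (INR x - m) in
  0 <= F x <= 1 /\
  F (S x) <= exp eps * F x + delta /\ F x <= exp eps * F (S x) + delta /\
  1 - F x <= exp eps * (1 - F (S x)) + delta /\ 1 - F (S x) <= exp eps * (1 - F x) + delta /\
  (0 < F x -> F (S x) = 1 \/ F (S x) >= exp eps * F x + delta \/
      F (S x) >= 1 - exp (- eps) * (1 - F x - delta)).
Proof.
  intros He Hd F. unfold F. rewrite S_INR.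
  replace (INR x + 1 - m) with (INR x - m + 1) by ring. apply F_props; auto.
Qed.

Lemma DP_seq n eps delta m : 0 < eps -> 0 <= delta ->
  DP_tests n eps delta (fun x : nat => Ftul eps delta (INR x - m)).
Proof.
  intros He Hd. split.
  - intros x _. apply (seq_props eps delta m x He Hd).
  - intros x _. destruct (seq_props eps delta m x He Hd) as [_ [A1 [A2 [A3 [A4 _]]]]]. tauto.
Qed.

Lemma cross_seq n eps delta m chi : 0 < eps -> 0 <= delta -> DP_tests n eps delta chi ->
  exists k, (k <= n)%nat /\ forall x, (x <= n)%nat ->
     ((x < k)%nat -> Ftul eps delta (INR x - m) <= chi x) /\
     ((k < x)%nat -> chi x <= Ftul eps delta (INR x - m)).
Proof.
  intros He Hd [H1 H2].
  destruct (bc_facts eps He) as [Hbc [Hb Hc]].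
  apply (crossing n (exp (- eps)) (exp eps) delta); auto; try lra.
  - intros x _ Hx. apply (seq_props eps delta m x He Hd); auto.
  - intros x Hx. destruct (H2 x Hx) as [A1 [A2 [A3 A4]]]. split; auto.
Qed.

Lemma const_DP n eps delta a : 0 < eps -> 0 <= delta -> 0 <= a <= 1 -> DP_tests n eps delta (fun _ => a).
Proof.
  intros He Hd Ha. assert (1 < exp eps) by (rewrite <- exp_0; apply exp_increasing; lra).
  assert (a <= exp eps * a) by nra. assert (1 - a <= exp eps * (1 - a)) by nra.
  split. unfold is_test; intros; lra. intros; repeat split; lra.
Qed.

Theorem corollary1 (eps delta alpha theta0 m1 m2 : R) (n : nat) :
  0 < eps -> 0 <= delta -> 0 < alpha < 1 -> (1 <= n)%nat -> 0 < theta0 < 1 ->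
  let b := exp (- eps) in
  let q := 2 * delta * b / (1 - b + 2 * delta * b) in
  let phi := fun x : nat => tulap_cdf 0 b q (INR x - m1) in
  let psi := fun x : nat => 1 - tulap_cdf 0 b q (INR x - m2) in
  expect n theta0 phi = alpha ->
  expect n theta0 psi = alpha ->
  UMP n (DP_tests n eps delta)
      (fun th => 0 <= th <= theta0) (fun th => theta0 < th <= 1) alpha phi /\
  UMP n (DP_tests n eps delta)
      (fun th => theta0 <= th <= 1) (fun th => 0 <= th < theta0) alpha psi.
Proof.
  intros He Hd Ha Hn Hth0 b q phi psi Ephi Epsi.
  set (F1 := fun x : nat => Ftul eps delta (INR x - m1)).
  set (F2 := fun x : nat => Ftul eps delta (INR x - m2)).
  change phi with F1 in *. change psi with (fun x => 1 - F2 x) in *.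
  clear phi psi.
  assert (DP1 : DP_tests n eps delta F1) by (apply DP_seq; auto).
  assert (DP2 : DP_tests n eps delta F2) by (apply DP_seq; auto).
  split; split; [ | split | | split].
  - exact DP1.
  - intros th Hth.
    destruct (cross_seq n eps delta m1 (fun _ => alpha) He Hd (const_DP n eps delta alpha He Hd ltac:(lra)))
      as [k [Hk Hx]].
    assert (Hc := compare n th theta0 k (fun _ => alpha) F1 ltac:(lra) Hth0).
    rewrite !expect_const, Ephi in Hc.
    assert (0 <= alpha - expect n th F1); [|lra].
    replace 0 with (rr n th theta0 k * (alpha - alpha)) by ring.
    apply Rge_le, Hc. intros x Hxn. destruct (Hx x Hxn) as [X1 X2].
    assert (R1 : (x <= k)%nat -> rr n th theta0 k <= rr n th theta0 x) by (intros; apply rr_down; auto; lra).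
    assert (R2 : (k <= x)%nat -> rr n th theta0 x <= rr n th theta0 k) by (intros; apply rr_down; auto; lra).
    unfold F1 in *.
    destruct (Nat.lt_trichotomy x k) as [L|[L|L]].
    + specialize (X1 L). specialize (R1 ltac:(lia)). nra.
    + subst. nra.
    + specialize (X2 L). specialize (R2 ltac:(lia)). nra.
  - intros chi Hchi Hlev th Hth.
    assert (E0 : expect n theta0 chi <= alpha) by (apply Hlev; lra).
    destruct (cross_seq n eps delta m1 chi He Hd Hchi) as [k [Hk Hx]].
    assert (Hc := compare n th theta0 k F1 chi ltac:(lra) Hth0).
    assert (0 <= rr n th theta0 k) by (apply rr_nonneg; lra).
    assert (expect n th F1 - expect n th chi >= rr n th theta0 k * (expect n theta0 F1 - expect n theta0 chi)); [|nra].
    apply Hc. intros x Hxn. destruct (Hx x Hxn) as [X1 X2].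
    assert (R1 : (x <= k)%nat -> rr n th theta0 x <= rr n th theta0 k) by (intros; apply rr_up; auto; lra).
    assert (R2 : (k <= x)%nat -> rr n th theta0 k <= rr n th theta0 x) by (intros; apply rr_up; auto; lra).
    unfold F1 in *.
    destruct (Nat.lt_trichotomy x k) as [L|[L|L]].
    + specialize (X1 L). specialize (R1 ltac:(lia)). nra.
    + subst. nra.
    + specialize (X2 L). specialize (R2 ltac:(lia)). nra.
  - apply DP_compl, DP2.
  - intros th Hth.
    destruct (cross_seq n eps delta m2 (fun _ => 1 - alpha) He Hd (const_DP n eps delta (1 - alpha) He Hd ltac:(lra)))
      as [k [Hk Hx]].
    assert (Hc := compare n th theta0 k (fun _ => alpha) (fun x => 1 - F2 x) ltac:(lra) Hth0).
    rewrite !expect_const, Epsi in Hc.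
    assert (0 <= alpha - expect n th (fun x => 1 - F2 x)); [|lra].
    replace 0 with (rr n th theta0 k * (alpha - alpha)) by ring.
    apply Rge_le, Hc. intros x Hxn. destruct (Hx x Hxn) as [X1 X2].
    assert (R1 : (x <= k)%nat -> rr n th theta0 x <= rr n th theta0 k) by (intros; apply rr_up; auto; lra).
    assert (R2 : (k <= x)%nat -> rr n th theta0 k <= rr n th theta0 x) by (intros; apply rr_up; auto; lra).
    unfold F2 in *.
    destruct (Nat.lt_trichotomy x k) as [L|[L|L]].
    + specialize (X1 L). specialize (R1 ltac:(lia)). nra.
    + subst. nra.
    + specialize (X2 L). specialize (R2 ltac:(lia)). nra.
  - intros chi Hchi Hlev th Hth.
    assert (E0 : expect n theta0 chi <= alpha) by (apply Hlev; lra).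
    destruct (cross_seq n eps delta m2 (fun x => 1 - chi x) He Hd (DP_compl _ _ _ _ Hchi)) as [k [Hk Hx]].
    assert (Hc := compare n th theta0 k (fun x => 1 - F2 x) chi ltac:(lra) Hth0).
    assert (0 <= rr n th theta0 k) by (apply rr_nonneg; lra).
    assert (expect n th (fun x => 1 - F2 x) - expect n th chi >= rr n th theta0 k * (expect n theta0 (fun x => 1 - F2 x) - expect n theta0 chi)); [|nra].
    apply Hc. intros x Hxn. destruct (Hx x Hxn) as [X1 X2].
    assert (R1 : (x <= k)%nat -> rr n th theta0 k <= rr n th theta0 x) by (intros; apply rr_down; auto; lra).
    assert (R2 : (k <= x)%nat -> rr n th theta0 x <= rr n th theta0 k) by (intros; apply rr_down; auto; lra).
    unfold F2 in *.
    destruct (Nat.lt_trichotomy x k) as [L|[L|L]].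
    + specialize (X1 L). specialize (R1 ltac:(lia)). nra.
    + subst. nra.
    + specialize (X2 L). specialize (R2 ltac:(lia)). nra.
Qed.
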